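(* Let $\alpha$ be an algebraic number of degree $3$ with conjugates $\alpha_1 = \alpha, \alpha_2, \alpha_3$. For a prime $q$, fix $q$-th roots $\alpha_1^{1/q},\alpha_2^{1/q},\alpha_3^{1/q}$ and a primitive $q$-th root of unity $\zeta_q$, let $K_q = \mathbb{Q}(\zeta_q, \alpha_1^{1/q}, \alpha_2^{1/q}, \alpha_3^{1/q})$, and let $C$ be the set of $\sigma \in \textup{Gal}(K_q/\mathbb{Q})$ such that: $\sigma(\zeta_q) = \zeta_q^{-1}$; there exist distinct $i,j \in \{1,2,3\}$ with $\sigma(\alpha_i) = \alpha_j$ and $\sigma(\alpha_j) = \alpha_i$; and for these $i,j$, $\sigma(\sigma(\alpha_i^{1/q})) = \alpha_i^{1/q}$ and $\sigma(\sigma(\alpha_j^{1/q})) = \alpha_j^{1/q}$. Then $|C| \ll q^2$. If moreover $|N(\alpha)| = 1$, then $|C| \ll q$.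
   Context: $N(\alpha)$ denotes the norm of $\alpha$ over $\mathbb{Q}$. The implied constants may depend on $\alpha$ but not on $q$. *)

(* Defs.v *)
From mathcomp Require Import all_boot all_algebra all_field.
Set Implicit Arguments. Unset Strict Implicit. Unset Printing Implicit Defensive.
Import GRing.Theory Num.Theory.
Local Open Scope ring_scope.

(* Elements of Gal(K_q/Q) are represented as restrictions to K_q of ring
   automorphisms of algC (every ring endomorphism of algC is an automorphism,
   and every element of Gal(K_q/Q) extends, K_q being normal over Q).
   Since K_q = Q(zeta, b_1, b_2, b_3), such a restriction is determined by
   (and determines) the tuple of images of the generators. *)

Definition in_C (z : algC) (a b : 'I_3 -> algC)
    (s : {rmorphism algC -> algC}) : Prop :=
  s z = z^-1 /\
  exists i j : 'I_3, [/\ i != j, s (a i) = a j, s (a j) = a i,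
                         s (s (b i)) = b i & s (s (b j)) = b j].

Definition gal_code (z : algC) (b : 'I_3 -> algC)
    (s : {rmorphism algC -> algC}) : algC * {ffun 'I_3 -> algC} :=
  (s z, [ffun i => s (b i)]).

Definition C_set (z : algC) (a b : 'I_3 -> algC)
    (t : algC * {ffun 'I_3 -> algC}) : Prop :=
  exists s : {rmorphism algC -> algC}, in_C z a b s /\ t = gal_code z b s.

(* Main.v *)
Require Import Defs.
From mathcomp Require Import all_boot all_algebra all_field.
From mathcomp Require Import zify ring.
Import GRing.Theory Num.Theory.
Local Open Scope ring_scope.

Lemma pig (i j x y : 'I_3) : i != j -> x != i -> x != j -> y != i -> y != j -> x = y.
Proof.
move=> H1 H2 H3 H4 H5; apply/val_inj.
move: H1 H2 H3 H4 H5 (ltn_ord i) (ltn_ord j) (ltn_ord x) (ltn_ord y).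
rewrite -!(inj_eq val_inj) /=; lia.
Qed.

Arguments pig {i j x y}.

Lemma ex3 (i j : 'I_3) : exists x : 'I_3, x != i /\ x != j.
Proof.
have [/existsP[x /andP[]]|h] := boolP [exists x : 'I_3, (x != i) && (x != j)]; first by eauto.
exfalso; move: h; rewrite negb_exists => /forallP h.
move: (h (@Ordinal 3 0 isT)) (h (@Ordinal 3 1 isT)) (h (@Ordinal 3 2 isT)).
rewrite -!(inj_eq val_inj) /=; lia.
Qed.

Lemma prod3 (F : 'I_3 -> algC) (i j x : 'I_3) : i != j -> x != i -> x != j ->
  \prod_y F y = F i * F j * F x.
Proof.
move=> hij hxi hxj.
rewrite (bigD1 i) //= (bigD1 j) /=; last by rewrite eq_sym.
rewrite (bigD1 x) /=; last by rewrite hxi hxj.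
rewrite big1 ?mulr1 ?mulrA // => y /andP[/andP[h1 h2] h3].
by rewrite (pig hij h1 h2 hxi hxj) eqxx in h3.
Qed.

Arguments prod3 F {i j x}.

Lemma rootq (q : nat) (z y w : algC) : q.-primitive_root z -> y ^+ q = w ^+ q ->
  exists k : 'I_q, y = z ^+ k * w.
Proof.
move=> hz hyw; have q0 := prim_order_gt0 hz.
have [w0|w0] := eqVneq w 0.
  exists (Ordinal q0); move: hyw; rewrite w0 expr0n gtn_eqF // mulr0.
  by move/eqP; rewrite expf_eq0 q0 /= => /eqP.
have h1 : (y / w) ^+ q = 1 by rewrite exprMn exprVn hyw divff // expf_neq0.
have [k hk] := prim_rootP hz h1.
by exists k; rewrite -hk divfK.
Qed.

Arguments rootq {q z y w}.

Lemma basic (q : nat) (z : algC) (a b : 'I_3 -> algC) (s : {rmorphism algC -> algC}) :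
  q.-primitive_root z -> (forall i, b i ^+ q = a i) -> in_C z a b s ->
  exists i j (k : 'I_q), [/\ s z = z^-1, i != j, s (b i) = z ^+ k * b j & s (b j) = z ^+ k * b i].
Proof.
move=> hz hb [hsz [i [j [hij h1 h2 h3 _]]]].
have e1 : s (b i) ^+ q = b j ^+ q by rewrite -rmorphXn (hb i) h1 (hb j).
have e2 : s (b j) ^+ q = b i ^+ q by rewrite -rmorphXn (hb j) h2 (hb i).
have [k hk] := rootq hz e1.
have [l hl] := rootq hz e2.
exists i, j, k; split => //.
have z0 : z != 0.
  apply/eqP => z0; move: (prim_expr_order hz).
  rewrite z0 expr0n (gtn_eqF (prim_order_gt0 hz)) mulr0n => /eqP.
  by rewrite eq_sym oner_eq0.
rewrite hk rmorphM rmorphXn hsz hl exprVn in h3.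
have := congr1 (fun t => z ^+ k * t) h3 => /=.
rewrite mulrA mulfV ?mul1r; last exact: expf_neq0.
move=> h4.
by rewrite hl h4.
Qed.

Arguments basic {q z a b s}.

Theorem lemma7p1 (p : {poly rat}) (a : 'I_3 -> algC)
  (p_irr : irreducible_poly p) (p_monic : p \is monic)
  (p_roots : map_poly ratr p = \prod_(i < 3) ('X - (a i)%:P)) :
  (exists c : nat, forall q : nat, prime q ->
     forall (z : algC) (b : 'I_3 -> algC),
       q.-primitive_root z -> (forall i, b i ^+ q = a i) ->
       forall s : seq (algC * {ffun 'I_3 -> algC}),
         uniq s -> (forall t, t \in s -> C_set z a b t) ->
         (size s <= c * q ^ 2)%N)
  /\
  (`|\prod_(i < 3) a i| = 1 ->
   exists c : nat, forall q : nat, prime q ->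
     forall (z : algC) (b : 'I_3 -> algC),
       q.-primitive_root z -> (forall i, b i ^+ q = a i) ->
       forall s : seq (algC * {ffun 'I_3 -> algC}),
         uniq s -> (forall t, t \in s -> C_set z a b t) ->
         (size s <= c * q)%N).
Proof.
have Hperm : forall (s : {rmorphism algC -> algC}) m, exists m', s (a m) = a m'.
  move=> s m.
  have h0 : (map_poly ratr p).[a m] = 0.
    by rewrite p_roots horner_prod (bigD1 m) //= hornerXsubC subrr mul0r.
  have : (map_poly ratr p).[s (a m)] = 0.
    have -> : map_poly ratr p = map_poly s (map_poly ratr p).
      by rewrite -map_poly_comp; apply: eq_map_poly => c /=; rewrite fmorph_rat.
    by rewrite horner_map h0 rmorph0.
  rewrite p_roots horner_prod => /eqP /prodf_eq0 [m' _].
  by rewrite hornerXsubC subr_eq0 => /eqP ->; exists m'.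
split.
  exists 27%N => q pq z b hz hb s us hs.
  pose f1 := fun t : 'I_3 * 'I_3 * 'I_3 * 'I_q * 'I_q =>
    let: (i, j, m, k, r) := t in
    (z^-1, [ffun x => if x == i then z ^+ k * b j else if x == j then z ^+ k * b i
                      else z ^+ r * b m]).
  apply: leq_trans (uniq_leq_size (s2 := codom f1) us _) _; last first.
    by rewrite size_codom !card_prod !card_ord; lia.
  move=> t /hs [s' [hC ->]].
  have [i [j [k [hsz hij hi hj]]]] := basic hz hb hC.
  have [x [hxi hxj]] := ex3 i j.
  have [m hm] := Hperm s' x.
  have e3 : s' (b x) ^+ q = b m ^+ q by rewrite -rmorphXn (hb x) hm (hb m).
  have [r hr] := rootq hz e3.
  have -> : gal_code z b s' = f1 (i, j, m, k, r); last exact: codom_f.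
  rewrite /gal_code /= hsz; congr pair; apply/ffunP => y; rewrite !ffunE.
  have [->|hyi] := eqVneq y i => //.
  have [->|hyj] := eqVneq y j => //.
  by rewrite (pig hij hyi hyj hxi hxj).
move=> hN.
exists 18%N => q pq z b hz hb s us hs.
pose beta := \prod_y b y.
pose f2 := fun t : 'I_3 * 'I_3 * 'I_q * bool =>
  let: (i, j, k, e) := t in
  (z^-1, [ffun x => if x == i then z ^+ k * b j else if x == j then z ^+ k * b i
                    else (if e then 1 else -1) / (beta * (z ^+ k * b j) * (z ^+ k * b i))]).
apply: leq_trans (uniq_leq_size (s2 := codom f2) us _) _; last first.
  by rewrite size_codom !card_prod !card_ord card_bool; lia.
have N0 : \prod_(i < 3) a i != 0 by apply/eqP => h; move: hN; rewrite h normr0 => /eqP; rewrite eq_sym oner_eq0.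
have a0 : forall m, a m != 0 by move=> m; move/prodf_neq0: N0; apply.
have b0 : forall m, b m != 0.
  by move=> m; apply/eqP => h; move: (a0 m); rewrite -hb h expr0n gtn_eqF ?prime_gt0 ?eqxx.
have beta0 : beta != 0 by apply/prodf_neq0 => m _; exact: b0.
have Nreal : \prod_(i < 3) a i \is Num.real.
  have h0 : (map_poly (ratr : rat -> algC) p).[ratr 0] = ratr p.[0] by rewrite horner_map.
  rewrite rmorph0 p_roots horner_prod in h0.
  have : \prod_(i < 3) (- a i) \is Num.real.
    rewrite (eq_bigr (fun i => ('X - (a i)%:P).[0])); last by move=> i _; rewrite hornerXsubC sub0r.
    by rewrite h0 /ratr realM ?realV ?realz.
  rewrite prodrN card_ord; have -> : (-1:algC) ^+ 3 = -1 by rewrite -signr_odd /= expr1.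
  by rewrite mulN1r realN.
have N2 : (\prod_(i < 3) a i) ^+ 2 = 1 by rewrite -real_normK // hN expr1n.
have gq : (beta ^+ 2) ^+ q = 1.
  by rewrite -exprM mulnC exprM /beta -prodrXl (eq_bigr _ (fun i _ => hb i)) N2.
have [e he] := prim_rootP hz gq.
move=> t /hs [s' [hC ->]].
have [i [j [k [hsz hij hi hj]]]] := basic hz hb hC.
have [x [hxi hxj]] := ex3 i j.
have hsb : (s' beta * beta) ^+ 2 = 1.
  rewrite exprMn -rmorphXn he rmorphXn hsz exprVn -he mulVf // expf_neq0 //.
have hsb' : s' beta * beta = if (s' beta * beta == 1) then 1 else -1.
  case: eqP => // /eqP h1; move/eqP: hsb; rewrite sqrf_eq1 (negbTE h1) /=; by move/eqP.
have -> : gal_code z b s' = f2 (i, j, k, s' beta * beta == 1); last exact: codom_f.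
rewrite /gal_code /= hsz; congr pair; apply/ffunP => y; rewrite !ffunE.
have [->|hyi] := eqVneq y i => //.
have [->|hyj] := eqVneq y j => //.
rewrite (pig hij hyi hyj hxi hxj) -hsb'.
have hp : s' beta = s' (b i) * s' (b j) * s' (b x) by rewrite rmorph_prod (prod3 _ hij hxi hxj).
rewrite hp -hi -hj.
have si0 : s' (b i) != 0 by rewrite fmorph_eq0.
have sj0 : s' (b j) != 0 by rewrite fmorph_eq0.
by field; rewrite beta0 si0 sj0.
Qed.
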